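(* Let $(W_n)_{n\in\omega}$ be a standard numbering of the c.e. subsets of $\omega$, $\langle\cdot,\cdot\rangle$ a computable pairing bijection, and $V_n=\{(i,j)\mid\langle i,j\rangle\in W_n\}$. Let $\mathbf{T}$, $\mathbf{P}$, $\mathbf{O}$ be the classes of all c.e. transitive relations, all c.e. preorders, and all c.e. partial orders on $\omega$, respectively. Then: (1) there is a computable function $t$ such that for all $m,n$: $V_{t(n)}\in\mathbf{T}$; $V_n\in\mathbf{T}$ implies $V_n=V_{t(n)}$; and $V_m=V_n$ implies $V_{t(m)}=V_{t(n)}$. (2) There is a computable function $p$ such that for all $m,n$: $V_{p(n)}\in\mathbf{P}$; $V_n\in\mathbf{P}$ implies $V_n=V_{p(n)}$; and $V_m=V_n$ implies $V_{p(m)}=V_{p(n)}$. (3) There is a computable function $o$ such that for all $n$: $V_{o(n)}\in\mathbf{O}$, and $V_n\in\mathbf{O}$ implies $V_n=V_{o(n)}$. *)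

(* Defs.v *)
From Stdlib Require Import Arith.

Definition cpair (i j : nat) : nat := (i + j) * (i + j + 1) / 2 + j.

(* its inverse, by enumeration along the diagonals *)
Fixpoint unpair (n : nat) : nat * nat :=
  match n with
  | 0 => (0, 0)
  | S n' => let (i, j) := unpair n' in
            match i with
            | 0 => (S j, 0)
            | S i' => (i', S j)
            end
  end.

(* Codes of unary partial recursive functions (a complete basis:
   zero, successor, unpairing projections, composition, pairing,
   primitive recursion with parameter, unbounded minimisation). *)
Inductive code : Type :=
| CZero | CSucc | CFst | CSnd
| CComp (f g : code)
| CPair (f g : code)
| CRec (f g : code)
| CMu (f : code).

Inductive eval : code -> nat -> nat -> Prop :=
| ev_zero x : eval CZero x 0
| ev_succ x : eval CSucc x (S x)
| ev_fst x : eval CFst x (fst (unpair x))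
| ev_snd x : eval CSnd x (snd (unpair x))
| ev_comp f g x y z : eval g x y -> eval f y z -> eval (CComp f g) x z
| ev_pair f g x y z : eval f x y -> eval g x z -> eval (CPair f g) x (cpair y z)
| ev_rec0 f g a y : eval f a y -> eval (CRec f g) (cpair a 0) y
| ev_recS f g a n z y :
    eval (CRec f g) (cpair a n) z -> eval g (cpair a (cpair n z)) y ->
    eval (CRec f g) (cpair a (S n)) y
| ev_mu f x y : mu_search f x 0 y -> eval (CMu f) x y
with mu_search : code -> nat -> nat -> nat -> Prop :=
| ms_found f x k : eval f (cpair x k) 0 -> mu_search f x k k
| ms_next f x k v y :
    eval f (cpair x k) (S v) -> mu_search f x (S k) y -> mu_search f x k y.

Fixpoint decode_fuel (fuel n : nat) : code :=
  match fuel with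
  | 0 => CZero
  | S fuel' =>
    let r := n / 8 in
    let a := fst (unpair r) in
    let b := snd (unpair r) in
    match n mod 8 with
    | 0 => CZero
    | 1 => CSucc
    | 2 => CFst
    | 3 => CSnd
    | 4 => CComp (decode_fuel fuel' a) (decode_fuel fuel' b)
    | 5 => CPair (decode_fuel fuel' a) (decode_fuel fuel' b)
    | 6 => CRec (decode_fuel fuel' a) (decode_fuel fuel' b)
    | _ => CMu (decode_fuel fuel' r)
    end
  end.

Definition decode (n : nat) : code := decode_fuel n n.

Definition phi (e x y : nat) : Prop := eval (decode e) x y.

Definition W (e x : nat) : Prop := exists y, phi e x y.

Definition V (e : nat) (i j : nat) : Prop := W e (cpair i j).

Definition computable (f : nat -> nat) : Prop :=
  exists e, forall x, phi e x (f x).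

Definition rel_eq (R S : nat -> nat -> Prop) : Prop :=
  forall i j, R i j <-> S i j.

Definition transitive_rel (R : nat -> nat -> Prop) : Prop :=
  forall a b c, R a b -> R b c -> R a c.
Definition reflexive_rel (R : nat -> nat -> Prop) : Prop := forall a, R a a.
Definition antisymmetric_rel (R : nat -> nat -> Prop) : Prop :=
  forall a b, R a b -> R b a -> a = b.

(* membership of V_e in the classes T, P, O (V_e is always c.e.) *)
Definition in_T (e : nat) : Prop := transitive_rel (V e).
Definition in_P (e : nat) : Prop := reflexive_rel (V e) /\ transitive_rel (V e).
Definition in_O (e : nat) : Prop :=
  reflexive_rel (V e) /\ transitive_rel (V e) /\ antisymmetric_rel (V e).

(* Main.v *)
Require Import Defs.
From Stdlib Require Import Arith Lia List ListDec.
Import ListNotations.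


Arguments cpair : simpl never.
Arguments unpair : simpl never.

Lemma unpair_S n : unpair (S n) =
  let (i, j) := unpair n in match i with 0 => (S j, 0) | S i' => (i', S j) end.
Proof. reflexivity. Qed.

Lemma unpair_0 : unpair 0 = (0,0).
Proof. reflexivity. Qed.

Lemma cpair_00 : cpair 0 0 = 0.
Proof. reflexivity. Qed.

Lemma cpair_S0 j : cpair (S j) 0 = S (cpair 0 j).
Proof.
  unfold cpair. rewrite !Nat.add_0_r. simpl (0 + j).
  replace ((S j) * (S j + 1)) with (j * (j+1) + (j+1) * 2) by lia.
  rewrite Nat.div_add by lia. lia.
Qed.

Lemma cpair_SS i j : cpair i (S j) = S (cpair (S i) j).
Proof.
  unfold cpair. replace (i + S j) with (S i + j) by lia. lia.
Qed.

Lemma cpair_unpair n : cpair (fst (unpair n)) (snd (unpair n)) = n.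
Proof.
  induction n as [|n IH]. reflexivity.
  rewrite unpair_S. destruct (unpair n) as [i j]. simpl in IH.
  destruct i as [|i]; simpl.
  - rewrite cpair_S0, IH. reflexivity.
  - rewrite cpair_SS, IH. reflexivity.
Qed.

Lemma unpair_cpair i j : unpair (cpair i j) = (i, j).
Proof.
  remember (i + j) as s eqn:Hs. revert i j Hs.
  induction s as [s IHs] using lt_wf_ind.
  intros i j Hs. revert i Hs. induction j as [|j IHj]; intros i Hs.
  - destruct i as [|i]. reflexivity.
    rewrite cpair_S0, unpair_S, (IHs i) by lia. reflexivity.
  - rewrite cpair_SS, unpair_S, (IHj (S i)) by lia. reflexivity.
Qed.

Lemma cpair_inj a b c d : cpair a b = cpair c d -> a = c /\ b = d.
Proof.
  intro H. pose proof (unpair_cpair a b) as H1. rewrite H, unpair_cpair in H1.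
  inversion H1; auto.
Qed.

Lemma unpair_sum n : fst (unpair n) + snd (unpair n) <= n.
Proof.
  induction n as [|n IH]. rewrite unpair_0. simpl. lia.
  rewrite unpair_S. destruct (unpair n) as [i j]. simpl in IH.
  destruct i; simpl; lia.
Qed.

Lemma p1_le n : fst (unpair n) <= n.
Proof. pose proof (unpair_sum n). lia. Qed.
Lemma p2_le n : snd (unpair n) <= n.
Proof. pose proof (unpair_sum n). lia. Qed.

Lemma cpair_ge_l i j : i <= cpair i j.
Proof. pose proof (p1_le (cpair i j)). rewrite unpair_cpair in H. exact H. Qed.
Lemma cpair_ge_r i j : j <= cpair i j.
Proof. pose proof (p2_le (cpair i j)). rewrite unpair_cpair in H. exact H. Qed.

Lemma cpair_mono i j i' j' : i <= i' -> j <= j' -> cpair i j <= cpair i' j'.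
Proof.
  intros. unfold cpair.
  assert ((i + j) * (i + j + 1) / 2 <= (i' + j') * (i' + j' + 1) / 2).
  { apply Nat.Div0.div_le_mono. apply Nat.mul_le_mono; lia. }
  lia.
Qed.

Ltac upc := repeat (rewrite unpair_cpair; cbn [fst snd]).

Fixpoint iter (n : nat) (f : nat -> nat) (x : nat) : nat :=
  match n with 0 => x | S m => f (iter m f x) end.

Inductive ex : Type :=
| X | Zr | Sc (e : ex) | Pr (a b : ex) | Fs (e : ex) | Sd (e : ex)
| Cp (a b : ex) | Pd (e : ex) | IfZ (c a b : ex) | It (b i n : ex).

Fixpoint den (e : ex) (x : nat) : nat :=
  match e with
  | X => x
  | Zr => 0
  | Sc e => S (den e x)
  | Pr a b => cpair (den a x) (den b x)
  | Fs e => fst (unpair (den e x))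
  | Sd e => snd (unpair (den e x))
  | Cp a b => den a (den b x)
  | Pd e => pred (den e x)
  | IfZ c a b => match den c x with 0 => den a x | S _ => den b x end
  | It b i n => iter (den n x) (fun st => den b (cpair x st)) (den i x)
  end.

Definition cid := CPair CFst CSnd.

Fixpoint compile (e : ex) : code :=
  match e with
  | X => cid
  | Zr => CZero
  | Sc e => CComp CSucc (compile e)
  | Pr a b => CPair (compile a) (compile b)
  | Fs e => CComp CFst (compile e)
  | Sd e => CComp CSnd (compile e)
  | Cp a b => CComp (compile a) (compile b)
  | Pd e => CComp (CRec CZero (CComp CFst CSnd)) (CPair cid (compile e))
  | IfZ c a b => CComp (CRec (compile a) (CComp (compile b) CFst)) (CPair cid (compile c))
  | It b i n => CComp (CRec CSnd (CComp (compile b) (CPair (CComp CFst CFst) (CComp CSnd CSnd))))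
                      (CPair (CPair cid (compile i)) (compile n))
  end.

Lemma ev_fst' x y : y = fst (unpair x) -> eval CFst x y.
Proof. intros ->. constructor. Qed.
Lemma ev_snd' x y : y = snd (unpair x) -> eval CSnd x y.
Proof. intros ->. constructor. Qed.

Lemma ev_id x : eval cid x x.
Proof.
  unfold cid. rewrite <- (cpair_unpair x) at 2. constructor; constructor.
Qed.

Fixpoint rr (F G : nat -> nat) (a n : nat) : nat :=
  match n with 0 => F a | S n => G (cpair a (cpair n (rr F G a n))) end.

Lemma ev_rec f g F G : (forall x, eval f x (F x)) -> (forall x, eval g x (G x)) ->
  forall a n, eval (CRec f g) (cpair a n) (rr F G a n).
Proof.
  intros Hf Hg a n. induction n; simpl. constructor; auto.
  econstructor; eauto.
Qed.

Lemma compile_ok e : forall x, eval (compile e) x (den e x).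
Proof.
  induction e; intro x; simpl.
  - apply ev_id.
  - constructor.
  - econstructor; eauto. constructor.
  - constructor; auto.
  - econstructor; eauto. constructor.
  - econstructor; eauto. constructor.
  - econstructor; eauto.
  - econstructor. constructor. apply ev_id. apply IHe.
    set (F := fun _ : nat => 0).
    set (G := fun y => fst (unpair (snd (unpair y)))).
    assert (Hr : rr F G x (den e x) = pred (den e x)).
    { destruct (den e x); simpl; unfold G; upc; reflexivity. }
    rewrite <- Hr. apply ev_rec.
    + intro; constructor.
    + intro y. econstructor. constructor. apply ev_fst'. reflexivity.
  - econstructor. constructor. apply ev_id. apply IHe1.
    set (G := fun y => den e3 (fst (unpair y))).
    assert (Hr : rr (den e2) G x (den e1 x) = match den e1 x with 0 => den e2 x | S _ => den e3 x end).
    { destruct (den e1 x); simpl; unfold G; upc; reflexivity. }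
    rewrite <- Hr. apply ev_rec. auto.
    intro y. econstructor. constructor. apply IHe3.
  - econstructor. constructor. constructor. apply ev_id. apply IHe2. apply IHe3.
    set (F := fun y => snd (unpair y)).
    set (G := fun y => den e1 (cpair (fst (unpair (fst (unpair y)))) (snd (unpair (snd (unpair y)))))).
    assert (Hr : forall n, rr F G (cpair x (den e2 x)) n = iter n (fun st => den e1 (cpair x st)) (den e2 x)).
    { induction n; simpl. unfold F; upc; reflexivity. rewrite <- IHn. unfold G. upc. reflexivity. }
    rewrite <- Hr. apply ev_rec.
    + intro; constructor.
    + intro y. unfold G. econstructor. 2: apply IHe1.
      constructor; econstructor; constructor.
Qed.


Lemma decode_fuel_stable : forall f1 f2 m, m <= f1 -> m <= f2 ->
  decode_fuel f1 m = decode_fuel f2 m.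
Proof.
  induction f1 as [|f1 IH]; intros f2 m H1 H2.
  - assert (m = 0) by lia. subst. destruct f2; reflexivity.
  - destruct m as [|m']. destruct f2; reflexivity.
    destruct f2 as [|f2]. lia.
    assert (Hd : S m' / 8 < S m') by (apply Nat.div_lt; lia).
    pose proof (p1_le (S m' / 8)). pose proof (p2_le (S m' / 8)).
    cbn [decode_fuel].
    destruct (S m' mod 8) as [|[|[|[|[|[|[|]]]]]]]; try reflexivity;
      f_equal; apply IH; lia.
Qed.

Definition dnode (n : nat) : code :=
  let r := n / 8 in
  match n mod 8 with
  | 0 => CZero | 1 => CSucc | 2 => CFst | 3 => CSnd
  | 4 => CComp (decode (fst (unpair r))) (decode (snd (unpair r)))
  | 5 => CPair (decode (fst (unpair r))) (decode (snd (unpair r)))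
  | 6 => CRec (decode (fst (unpair r))) (decode (snd (unpair r)))
  | _ => CMu (decode r)
  end.

Lemma decode_unfold n : decode n = dnode n.
Proof.
  unfold dnode, decode. destruct n as [|n']. reflexivity.
  assert (Hd : S n' / 8 < S n') by (apply Nat.div_lt; lia).
  pose proof (p1_le (S n' / 8)). pose proof (p2_le (S n' / 8)).
  cbn [decode_fuel].
  destruct (S n' mod 8) as [|[|[|[|[|[|[|]]]]]]]; try reflexivity;
    f_equal; apply decode_fuel_stable; lia.
Qed.

Fixpoint enc (c : code) : nat :=
  match c with
  | CZero => 0 | CSucc => 1 | CFst => 2 | CSnd => 3
  | CComp f g => 8 * cpair (enc f) (enc g) + 4
  | CPair f g => 8 * cpair (enc f) (enc g) + 5
  | CRec f g => 8 * cpair (enc f) (enc g) + 6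
  | CMu f => 8 * enc f + 7
  end.

Lemma div8 m t : t < 8 -> (8 * m + t) / 8 = m.
Proof. intro. symmetry. apply (Nat.div_unique _ 8 m t); lia. Qed.
Lemma mod8 m t : t < 8 -> (8 * m + t) mod 8 = t.
Proof. intro. symmetry. apply (Nat.mod_unique _ 8 m t); lia. Qed.

Lemma decode_enc c : decode (enc c) = c.
Proof.
  induction c; try reflexivity; rewrite decode_unfold; unfold dnode; cbn [enc];
  rewrite ?mod8, ?div8 by lia; cbv iota beta zeta; upc; congruence.
Qed.

Scheme eval_mut := Induction for eval Sort Prop
with mu_mut := Induction for mu_search Sort Prop.

Ltac fin_det := subst; repeat match goal with
  | [IH : forall y2, eval ?c ?x y2 -> ?a = y2, H : eval ?c ?x ?b |- _] =>
      apply IH in H; subst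
  | [IH : forall y2, mu_search ?c ?x ?k y2 -> ?a = y2, H : mu_search ?c ?x ?k ?b |- _] =>
      apply IH in H; subst
  end; auto; try discriminate.

Lemma eval_det : forall c x y1, eval c x y1 -> forall y2, eval c x y2 -> y1 = y2.
Proof.
  apply (eval_mut (fun c x y1 _ => forall y2, eval c x y2 -> y1 = y2)
                  (fun f x k y1 _ => forall y2, mu_search f x k y2 -> y1 = y2)).
  - intros x y2 H. inversion H; auto.
  - intros x y2 H. inversion H; auto.
  - intros x y2 H. inversion H; auto.
  - intros x y2 H. inversion H; auto.
  - intros f g x y z H1 IH1 H2 IH2 y2 H. inversion H; fin_det.
  - intros f g x y z H1 IH1 H2 IH2 y2 H. inversion H; fin_det.
  - intros f g a y H1 IH1 y2 H. inversion H; subst;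
    match goal with Hc : cpair _ _ = cpair _ _ |- _ => apply cpair_inj in Hc; destruct Hc end;
    subst; fin_det; lia.
  - intros f g a n z y H1 IH1 H2 IH2 y2 H. inversion H; subst;
    match goal with Hc : cpair _ _ = cpair _ _ |- _ => apply cpair_inj in Hc; destruct Hc end;
    subst; try lia.
    match goal with Hn : S _ = S _ |- _ => injection Hn as <- end. fin_det.
  - intros f x y H1 IH1 y2 H. inversion H; fin_det.
  - intros f x k H1 IH1 y2 H. inversion H; fin_det.
  - intros f x k v y H1 IH1 H2 IH2 y2 H. inversion H; fin_det.
Qed.

Lemma mu_search_total f F x : (forall z, eval f z (F z)) ->
  forall d k, F (cpair x (k + d)) = 0 -> exists y, mu_search f x k y.
Proof.
  intros HF d. induction d; intros k Hk.
  - rewrite Nat.add_0_r in Hk. exists k. constructor. rewrite <- Hk. auto.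
  - destruct (F (cpair x k)) eqn:E.
    + exists k. constructor. rewrite <- E. auto.
    + destruct (IHd (S k)) as [y Hy]. rewrite <- Hk. f_equal. f_equal. lia.
      exists y. econstructor. rewrite <- E. auto. auto.
Qed.

Lemma mu_search_sound f F x : (forall z, eval f z (F z)) ->
  forall k y, mu_search f x k y -> F (cpair x y) = 0.
Proof.
  intros HF k y H. induction H.
  - eapply eval_det; eauto.
  - auto.
Qed.

Lemma eval_mu_iff f F x : (forall z, eval f z (F z)) ->
  (exists y, eval (CMu f) x y) <-> exists k, F (cpair x k) = 0.
Proof.
  intro HF. split.
  - intros [y Hy]. inversion Hy; subst. exists y. eapply mu_search_sound; eauto.
  - intros [k Hk]. destruct (mu_search_total f F x HF k 0) as [y Hy]. simpl. auto.
    exists y. constructor. auto.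
Qed.


Fixpoint KN (m : nat) : ex := match m with 0 => Zr | S m => Sc (KN m) end.
Lemma den_KN m x : den (KN m) x = m.
Proof. induction m; simpl; auto. Qed.

Definition dm8 : ex :=
  It (IfZ (Sd (Sd X)) (Pr (Sc (Fs (Sd X))) (KN 7)) (Pr (Fs (Sd X)) (Pd (Sd (Sd X)))))
     (Pr Zr (KN 7)) X.

Lemma iter_ext n f g x : (forall st, f st = g st) -> iter n f x = iter n g x.
Proof. intro H. induction n; simpl; congruence. Qed.

Lemma den_dm8 n : den dm8 n = cpair (n / 8) (7 - n mod 8).
Proof.
  unfold dm8. cbn [den]. rewrite !den_KN.
  erewrite iter_ext with (g := fun st => match snd (unpair st) with
      0 => cpair (S (fst (unpair st))) 7 | S _ => cpair (fst (unpair st)) (pred (snd (unpair st))) end).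
  2:{ intro st. upc. rewrite den_KN. reflexivity. }
  induction n as [|n IH].
  - reflexivity.
  - cbn [iter]. rewrite IH. upc.
    pose proof (Nat.div_mod_eq n 8) as Hd. pose proof (Nat.mod_upper_bound n 8 ltac:(lia)) as Hm.
    destruct (7 - n mod 8) as [|d] eqn:E.
    + assert (n mod 8 = 7) by lia.
      replace (S n) with (8 * (n / 8 + 1) + 0) by lia.
      rewrite div8, mod8 by lia. f_equal; lia.
    + replace (S n) with (8 * (n / 8) + (n mod 8 + 1)) by lia.
      rewrite div8, mod8 by lia. f_equal. lia.
Qed.

Definition mkEv (e x K : ex) := Pr Zr (Pr e (Pr x K)).
Definition mkRet (v K : ex) := Pr (KN 1) (Pr v K).
Definition mkFr (t : nat) (p K : ex) := Pr (KN t) (Pr p K).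

(* eval branch; env = cpair st (cpair q d) *)
Definition st1 := Fs X.
Definition xE := Fs (Sd (Sd st1)).
Definition KE := Sd (Sd (Sd st1)).
Definition qE := Fs (Sd X).
Definition dE := Sd (Sd X).
Definition aE := Fs qE.
Definition bE := Sd qE.

Definition ev_body : ex :=
  IfZ dE (mkEv qE (Pr xE Zr) (mkFr 5 (Pr qE (Pr xE Zr)) KE))
 (IfZ (Pd dE) (mkEv aE (Fs xE) (mkFr 4 (Pr bE (Pr (Fs xE) (Pr Zr (Sd xE)))) KE))
 (IfZ (Pd (Pd dE)) (mkEv aE xE (mkFr 2 (Pr bE xE) KE))
 (IfZ (Pd (Pd (Pd dE))) (mkEv bE xE (mkFr 1 aE KE))
 (IfZ (Pd (Pd (Pd (Pd dE)))) (mkRet (Sd xE) KE)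
 (IfZ (Pd (Pd (Pd (Pd (Pd dE))))) (mkRet (Fs xE) KE)
 (IfZ (Pd (Pd (Pd (Pd (Pd (Pd dE)))))) (mkRet (Sc xE) KE)
      (mkRet Zr KE))))))).

Definition ev_branch := Cp ev_body (Pr X (Cp dm8 (Fs (Sd X)))).

(* return branch; env = st *)
Definition vR := Fs (Sd X).
Definition KR := Sd (Sd X).
Definition ftR := Fs KR.
Definition PR := Fs (Sd KR).
Definition K'R := Sd (Sd KR).

Definition ret_body : ex :=
  IfZ ftR X
 (IfZ (Pd ftR) (mkEv PR vR K'R)
 (IfZ (Pd (Pd ftR)) (mkEv (Fs PR) (Sd PR) (mkFr 3 vR K'R))
 (IfZ (Pd (Pd (Pd ftR))) (mkRet (Pr PR vR) K'R)
 (IfZ (Pd (Pd (Pd (Pd ftR))))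
    (IfZ (Sd (Sd (Sd PR))) (mkRet vR K'R)
       (mkEv (Fs PR) (Pr (Fs (Sd PR)) (Pr (Fs (Sd (Sd PR))) vR))
          (mkFr 4 (Pr (Fs PR) (Pr (Fs (Sd PR)) (Pr (Sc (Fs (Sd (Sd PR)))) (Pd (Sd (Sd (Sd PR)))))))
             K'R)))
 (IfZ (Pd (Pd (Pd (Pd (Pd ftR)))))
    (IfZ vR (mkRet (Sd (Sd PR)) K'R)
       (mkEv (Fs PR) (Pr (Fs (Sd PR)) (Sc (Sd (Sd PR))))
          (mkFr 5 (Pr (Fs PR) (Pr (Fs (Sd PR)) (Sc (Sd (Sd PR))))) K'R)))
    X))))).

Definition step_ex := IfZ (Fs X) ev_branch ret_body.
Definition step (st : nat) : nat := den step_ex st.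

Definition st_ev e x K := cpair 0 (cpair e (cpair x K)).
Definition st_ret v K := cpair 1 (cpair v K).
Definition fr t p K := cpair t (cpair p K).
Definition kcomp f K := fr 1 f K.
Definition kpair1 g x K := fr 2 (cpair g x) K.
Definition kpair2 y K := fr 3 y K.
Definition krec g a i m K := fr 4 (cpair g (cpair a (cpair i m))) K.
Definition kmu f x k K := fr 5 (cpair f (cpair x k)) K.

Ltac dstep := unfold step, step_ex, ev_branch, ev_body, ret_body, mkEv, mkRet, mkFr,
  xE, KE, aE, bE, st1, qE, dE, PR, K'R, ftR, vR, KR,
  st_ev, st_ret, kcomp, kpair1, kpair2, krec, kmu, fr;
  cbn [den KN]; upc.

Lemma step_ev e x K : step (st_ev e x K) =
  let q := e / 8 in
  match e mod 8 with
  | 0 => st_ret 0 K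
  | 1 => st_ret (S x) K
  | 2 => st_ret (fst (unpair x)) K
  | 3 => st_ret (snd (unpair x)) K
  | 4 => st_ev (snd (unpair q)) x (kcomp (fst (unpair q)) K)
  | 5 => st_ev (fst (unpair q)) x (kpair1 (snd (unpair q)) x K)
  | 6 => st_ev (fst (unpair q)) (fst (unpair x)) (krec (snd (unpair q)) (fst (unpair x)) 0 (snd (unpair x)) K)
  | _ => st_ev q (cpair x 0) (kmu q x 0 K)
  end.
Proof.
  dstep. rewrite den_dm8. upc.
  pose proof (Nat.mod_upper_bound e 8 ltac:(lia)) as Hm.
  destruct (e mod 8) as [|[|[|[|[|[|[|[|r]]]]]]]]; try lia; reflexivity.
Qed.

Lemma step_halt st : fst (unpair st) <> 0 -> fst (unpair (snd (unpair (snd (unpair st))))) = 0 ->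
  step st = st.
Proof.
  intros H1 H2. unfold step, step_ex, ret_body, ftR, KR. cbn [den].
  destruct (fst (unpair st)). congruence. rewrite H2. reflexivity.
Qed.

Lemma step_ret_gen st : fst (unpair st) <> 0 ->
  0 < fst (unpair (snd (unpair (snd (unpair st))))) < 6 ->
  step st = step (st_ret (fst (unpair (snd (unpair st)))) (snd (unpair (snd (unpair st))))).
Proof.
  intros H H2. unfold step, step_ex at 1 2, st_ret. cbn [den]. upc.
  destruct (fst (unpair st)). congruence.
  unfold ret_body, mkEv, mkRet, mkFr, PR, K'R, ftR, vR, KR. cbn [den]. upc.
  destruct (fst (unpair (snd (unpair (snd (unpair st)))))) as [|[|[|[|[|[|]]]]]]; try lia;
  reflexivity.
Qed.

Lemma step_garbage st : fst (unpair st) <> 0 ->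
  6 <= fst (unpair (snd (unpair (snd (unpair st))))) -> step st = st.
Proof.
  intros H H2. unfold step, step_ex, ret_body, ftR, KR. cbn [den].
  destruct (fst (unpair st)). congruence.
  destruct (fst (unpair (snd (unpair (snd (unpair st)))))) as [|[|[|[|[|[|]]]]]]; try lia;
  reflexivity.
Qed.

Lemma step_ret_comp v f K : step (st_ret v (kcomp f K)) = st_ev f v K.
Proof. dstep. reflexivity. Qed.
Lemma step_ret_pair1 v g x K : step (st_ret v (kpair1 g x K)) = st_ev g x (kpair2 v K).
Proof. dstep. reflexivity. Qed.
Lemma step_ret_pair2 v y K : step (st_ret v (kpair2 y K)) = st_ret (cpair y v) K.
Proof. dstep. reflexivity. Qed.
Lemma step_ret_rec0 v g a i K : step (st_ret v (krec g a i 0 K)) = st_ret v K.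
Proof. dstep. reflexivity. Qed.
Lemma step_ret_recS v g a i m K :
  step (st_ret v (krec g a i (S m) K)) = st_ev g (cpair a (cpair i v)) (krec g a (S i) m K).
Proof. dstep. reflexivity. Qed.
Lemma step_ret_mu0 f x k K : step (st_ret 0 (kmu f x k K)) = st_ret k K.
Proof. dstep. reflexivity. Qed.
Lemma step_ret_muS v f x k K :
  step (st_ret (S v) (kmu f x k K)) = st_ev f (cpair x (S k)) (kmu f x (S k) K).
Proof. dstep. reflexivity. Qed.


Lemma iter_shift s f x : iter s f (f x) = f (iter s f x).
Proof. induction s; simpl; congruence. Qed.
Lemma iter_add a b f x : iter (a + b) f x = iter a f (iter b f x).
Proof. induction a; simpl; congruence. Qed.

Definition reach a b := exists s, iter s step a = b.
Lemma reach_refl a : reach a a. Proof. exists 0. reflexivity. Qed.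
Lemma reach_trans a b c : reach a b -> reach b c -> reach a c.
Proof. intros [s1 H1] [s2 H2]. exists (s2 + s1). rewrite iter_add, H1. auto. Qed.
Lemma reach_step a b : reach (step a) b -> reach a b.
Proof. intros [s H]. exists (S s). simpl. rewrite <- iter_shift. auto. Qed.

Lemma decode_inv e c : decode e = c ->
  match c with
  | CZero => e mod 8 = 0 | CSucc => e mod 8 = 1 | CFst => e mod 8 = 2 | CSnd => e mod 8 = 3
  | CComp f g => e mod 8 = 4 /\ decode (fst (unpair (e/8))) = f /\ decode (snd (unpair (e/8))) = g
  | CPair f g => e mod 8 = 5 /\ decode (fst (unpair (e/8))) = f /\ decode (snd (unpair (e/8))) = g
  | CRec f g => e mod 8 = 6 /\ decode (fst (unpair (e/8))) = f /\ decode (snd (unpair (e/8))) = g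
  | CMu f => e mod 8 = 7 /\ decode (e/8) = f
  end.
Proof.
  intro H. rewrite decode_unfold in H. unfold dnode in H.
  pose proof (Nat.mod_upper_bound e 8 ltac:(lia)) as Hm.
  destruct (e mod 8) as [|[|[|[|[|[|[|[|r]]]]]]]] eqn:E; try lia; subst; auto.
Qed.

Definition Pc (c : code) (x y : nat) : Prop :=
  (forall e K, decode e = c -> reach (st_ev e x K) (st_ret y K)) /\
  (forall f g a n, c = CRec f g -> x = cpair a n -> forall ef eg K m,
     decode ef = f -> decode eg = g ->
     reach (st_ev ef a (krec eg a 0 (n + m) K)) (st_ret y (krec eg a n m K))).

Definition Qc (f : code) (x k y : nat) : Prop :=
  forall ef K, decode ef = f -> reach (st_ev ef (cpair x k) (kmu ef x k K)) (st_ret y K).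

Lemma rec_first f g x y :
  (forall f' g' a n, CRec f g = CRec f' g' -> x = cpair a n -> forall ef eg K m,
     decode ef = f' -> decode eg = g' ->
     reach (st_ev ef a (krec eg a 0 (n + m) K)) (st_ret y (krec eg a n m K))) ->
  forall e K, decode e = CRec f g -> reach (st_ev e x K) (st_ret y K).
Proof.
  intros H e K He. apply decode_inv in He. destruct He as (Hm & H1 & H2).
  apply reach_step. rewrite step_ev, Hm. cbv zeta iota.
  eapply reach_trans.
  - specialize (H f g (fst (unpair x)) (snd (unpair x)) eq_refl (eq_sym (cpair_unpair x))
      _ _ K 0 H1 H2). rewrite Nat.add_0_r in H. exact H.
  - apply reach_step. rewrite step_ret_rec0. apply reach_refl.
Qed.

Lemma complete : forall c x y, eval c x y -> Pc c x y.
Proof.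
  apply (eval_mut (fun c x y _ => Pc c x y) (fun f x k y _ => Qc f x k y)); unfold Pc, Qc.
  - split; [|discriminate]. intros e K He. apply decode_inv in He.
    apply reach_step. rewrite step_ev, He. apply reach_refl.
  - split; [|discriminate]. intros e K He. apply decode_inv in He.
    apply reach_step. rewrite step_ev, He. apply reach_refl.
  - split; [|discriminate]. intros e K He. apply decode_inv in He.
    apply reach_step. rewrite step_ev, He. apply reach_refl.
  - split; [|discriminate]. intros e K He. apply decode_inv in He.
    apply reach_step. rewrite step_ev, He. apply reach_refl.
  - intros f g x y z H1 [IH1 _] H2 [IH2 _]. split; [|discriminate].
    intros e K He. apply decode_inv in He. destruct He as (Hm & Hf & Hg).
    apply reach_step. rewrite step_ev, Hm. cbv zeta iota.
    eapply reach_trans. apply IH1; eauto.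
    apply reach_step. rewrite step_ret_comp. apply IH2; auto.
  - intros f g x y z H1 [IH1 _] H2 [IH2 _]. split; [|discriminate].
    intros e K He. apply decode_inv in He. destruct He as (Hm & Hf & Hg).
    apply reach_step. rewrite step_ev, Hm. cbv zeta iota.
    eapply reach_trans. apply IH1; eauto.
    apply reach_step. rewrite step_ret_pair1.
    eapply reach_trans. apply IH2; eauto.
    apply reach_step. rewrite step_ret_pair2. apply reach_refl.
  - intros f g a y H1 [IH1 _].
    assert (H2 : forall f' g' a' n, CRec f g = CRec f' g' -> cpair a 0 = cpair a' n ->
      forall ef eg K m, decode ef = f' -> decode eg = g' ->
      reach (st_ev ef a' (krec eg a' 0 (n + m) K)) (st_ret y (krec eg a' n m K))).
    { intros f' g' a' n Hc Hx ef eg K m Hf Hg. injection Hc as <- <-.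
      apply cpair_inj in Hx. destruct Hx as [<- <-]. simpl. apply IH1. auto. }
    split; auto. apply rec_first. auto.
  - intros f g a n z y H1 [_ IH1] H2 [IH2 _].
    assert (H3 : forall f' g' a' n', CRec f g = CRec f' g' -> cpair a (S n) = cpair a' n' ->
      forall ef eg K m, decode ef = f' -> decode eg = g' ->
      reach (st_ev ef a' (krec eg a' 0 (n' + m) K)) (st_ret y (krec eg a' n' m K))).
    { intros f' g' a' n' Hc Hx ef eg K m Hf Hg. injection Hc as <- <-.
      apply cpair_inj in Hx. destruct Hx as [<- <-].
      eapply reach_trans.
      - replace (S n + m) with (n + S m) by lia. apply (IH1 f g a n eq_refl eq_refl); auto.
      - apply reach_step. rewrite step_ret_recS. apply IH2. auto. }
    split; auto. apply rec_first. auto.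
  - intros f x y H1 IH1. split; [|discriminate].
    intros e K He. apply decode_inv in He. destruct He as (Hm & Hf).
    apply reach_step. rewrite step_ev, Hm. cbv zeta iota. apply IH1; auto.
  - intros f x k H1 [IH1 _] ef K Hf.
    eapply reach_trans. apply IH1; auto.
    apply reach_step. rewrite step_ret_mu0. apply reach_refl.
  - intros f x k v y H1 [IH1 _] H2 IH2 ef K Hf.
    eapply reach_trans. apply IH1; auto.
    apply reach_step. rewrite step_ret_muS. apply IH2; auto.
Qed.

Inductive recrel (g a : nat) : nat -> nat -> nat -> nat -> Prop :=
| rr0 i z : recrel g a i z 0 z
| rrS i z m z' w : eval (decode g) (cpair a (cpair i z)) z' -> recrel g a (S i) z' m w ->
    recrel g a i z (S m) w.

Inductive musem (f x k : nat) : nat -> nat -> Prop :=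
| mus0 : musem f x k 0 k
| musS v r : mu_search (decode f) x (S k) r -> musem f x k (S v) r.

Inductive Kden : nat -> nat -> nat -> Prop :=
| kd_nil K v : fst (unpair K) = 0 -> Kden K v v
| kd_comp f K v w y : eval (decode f) v w -> Kden K w y -> Kden (kcomp f K) v y
| kd_pair1 g x K v z y : eval (decode g) x z -> Kden K (cpair v z) y -> Kden (kpair1 g x K) v y
| kd_pair2 y0 K z y : Kden K (cpair y0 z) y -> Kden (kpair2 y0 K) z y
| kd_rec g a i m K z w y : recrel g a i z m w -> Kden K w y -> Kden (krec g a i m K) z y
| kd_mu f x k K v r y : musem f x k v r -> Kden K r y -> Kden (kmu f x k K) v y.

Ltac cinj := repeat match goal with
  | H : cpair _ _ = cpair _ _ |- _ => apply cpair_inj in H; destruct H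
  | H : fst (unpair (cpair _ _)) = _ |- _ => rewrite unpair_cpair in H; cbn [fst] in H
  end; subst; try discriminate; try lia.

Ltac kinv H := inversion H; subst; unfold kcomp, kpair1, kpair2, krec, kmu, fr in *; cinj; eauto.

Lemma Kinv_comp f K v y : Kden (kcomp f K) v y -> exists w, eval (decode f) v w /\ Kden K w y.
Proof. intro H. kinv H. Qed.
Lemma Kinv_pair1 g x K v y : Kden (kpair1 g x K) v y ->
  exists z, eval (decode g) x z /\ Kden K (cpair v z) y.
Proof. intro H. kinv H. Qed.
Lemma Kinv_pair2 y0 K z y : Kden (kpair2 y0 K) z y -> Kden K (cpair y0 z) y.
Proof. intro H. kinv H. Qed.
Lemma Kinv_rec g a i m K z y : Kden (krec g a i m K) z y ->
  exists w, recrel g a i z m w /\ Kden K w y.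
Proof. intro H. kinv H. Qed.
Lemma Kinv_mu f x k K v y : Kden (kmu f x k K) v y ->
  exists r, musem f x k v r /\ Kden K r y.
Proof. intro H. kinv H. Qed.


Definition Sden (st y : nat) : Prop :=
  match fst (unpair st) with
  | 0 => exists v, eval (decode (fst (unpair (snd (unpair st)))))
                        (fst (unpair (snd (unpair (snd (unpair st)))))) v /\
                   Kden (snd (unpair (snd (unpair (snd (unpair st)))))) v y
  | S _ => Kden (snd (unpair (snd (unpair st)))) (fst (unpair (snd (unpair st)))) y
  end.

Lemma decomp n : exists a b, n = cpair a b.
Proof. exists (fst (unpair n)), (snd (unpair n)). symmetry. apply cpair_unpair. Qed.

Lemma rec_from_recrel f g a i z m w :
  eval (CRec f (decode g)) (cpair a i) z -> recrel g a i z m w ->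
  eval (CRec f (decode g)) (cpair a (i + m)) w.
Proof.
  intros H1 H2. induction H2.
  - rewrite Nat.add_0_r. auto.
  - replace (i + S m) with (S i + m) by lia. apply IHrecrel. econstructor; eauto.
Qed.

Lemma mu_from_musem f x k v r :
  eval (decode f) (cpair x k) v -> musem f x k v r -> mu_search (decode f) x k r.
Proof.
  intros H1 H2. inversion H2; subst. constructor; auto. econstructor; eauto.
Qed.

Lemma dnode_at e t : e mod 8 = t -> decode e = dnode e.
Proof. intros. apply decode_unfold. Qed.

Lemma backward st y : Sden (step st) y -> Sden st y.
Proof.
  destruct (decomp st) as (m & r & ->).
  destruct m as [|m].
  -
    destruct (decomp r) as (e & r2 & ->). destruct (decomp r2) as (x & K & ->).
    change (cpair 0 (cpair e (cpair x K))) with (st_ev e x K).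
    rewrite step_ev. unfold Sden, st_ev, st_ret, kcomp, kpair1, kpair2, krec, kmu, fr. upc.
    rewrite (decode_unfold e). unfold dnode.
    pose proof (Nat.mod_upper_bound e 8 ltac:(lia)) as Hm.
    destruct (e mod 8) as [|[|[|[|[|[|[|[|t]]]]]]]]; try lia; cbv zeta iota; upc.
    + intro H. exists 0. split; auto. constructor.
    + intro H. eexists. split; eauto. constructor.
    + intro H. eexists. split; eauto. constructor.
    + intro H. eexists. split; eauto. constructor.
    + intros (v & H1 & H2).
      apply Kinv_comp in H2. destruct H2 as (w & H3 & H4).
      exists w. split; auto. econstructor; eauto.
    + intros (v & H1 & H2).
      apply Kinv_pair1 in H2. destruct H2 as (w & H3 & H4).
      exists (cpair v w). split; auto. econstructor; eauto.
    + intros (v & H1 & H2).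
      apply Kinv_rec in H2. destruct H2 as (w & H3 & H4).
      exists w. split; auto. rewrite <- (cpair_unpair x).
      apply (rec_from_recrel _ _ _ 0 v). constructor. auto. auto.
    + intros (v & H1 & H2).
      apply Kinv_mu in H2. destruct H2 as (w & H3 & H4).
      exists w. split; auto. constructor. eapply mu_from_musem; eauto.
  -
    destruct (decomp r) as (v & K & ->).
    destruct (decomp K) as (t & r3 & ->). destruct (decomp r3) as (P & K' & ->).
    destruct (Nat.eq_dec t 0) as [Ht|Ht].
    + rewrite step_halt. auto. upc. auto. upc. auto.
    + destruct (le_lt_dec 6 t) as [Ht2|Ht2].
      { rewrite step_garbage. auto. upc. auto. upc. auto. }
      rewrite step_ret_gen by (upc; lia). upc.
      unfold Sden at 2. upc.
      destruct t as [|[|[|[|[|[|t]]]]]]; try lia.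
      * change (cpair 1 (cpair P K')) with (kcomp P K'). rewrite step_ret_comp.
        unfold Sden, st_ev. upc. intros (w & H1 & H2). econstructor; eauto.
      * destruct (decomp P) as (g & x & ->).
        change (cpair 2 (cpair (cpair g x) K')) with (kpair1 g x K'). rewrite step_ret_pair1.
        unfold Sden, st_ev. upc. intros (w & H1 & H2). apply Kinv_pair2 in H2.
        econstructor; eauto.
      * change (cpair 3 (cpair P K')) with (kpair2 P K'). rewrite step_ret_pair2.
        unfold Sden, st_ret. upc. intro H. constructor. auto.
      * destruct (decomp P) as (g & P2 & ->). destruct (decomp P2) as (a & P3 & ->).
        destruct (decomp P3) as (i & mm & ->).
        change (cpair 4 (cpair (cpair g (cpair a (cpair i mm))) K')) with (krec g a i mm K').
        destruct mm as [|mm].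
        -- rewrite step_ret_rec0. unfold Sden, st_ret. upc. intro H.
           econstructor; eauto. constructor.
        -- rewrite step_ret_recS. unfold Sden, st_ev. upc. intros (w & H1 & H2).
           apply Kinv_rec in H2. destruct H2 as (w2 & H3 & H4).
           econstructor; eauto. econstructor; eauto.
      * destruct (decomp P) as (f & P2 & ->). destruct (decomp P2) as (x & k & ->).
        change (cpair 5 (cpair (cpair f (cpair x k)) K')) with (kmu f x k K').
        destruct v as [|v].
        -- rewrite step_ret_mu0. unfold Sden, st_ret. upc. intro H.
           econstructor; eauto. constructor.
        -- rewrite step_ret_muS. unfold Sden, st_ev. upc. intros (w & H1 & H2).
           apply Kinv_mu in H2. destruct H2 as (w2 & H3 & H4).
           econstructor; eauto. constructor. eapply mu_from_musem; eauto.
Qed.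

Definition halted (st : nat) : Prop :=
  fst (unpair st) <> 0 /\ fst (unpair (snd (unpair (snd (unpair st))))) = 0.

Lemma sound_iter s : forall st, halted (iter s step st) ->
  Sden st (fst (unpair (snd (unpair (iter s step st))))).
Proof.
  induction s as [|s IH]; intros st H.
  - simpl in *. destruct H as [H1 H2]. unfold Sden.
    destruct (fst (unpair st)). congruence. constructor. auto.
  - simpl in *. rewrite <- iter_shift in *. apply backward. apply IH. auto.
Qed.

Lemma W_iff e x : W e x <-> exists s, halted (iter s step (st_ev e x 0)).
Proof.
  split.
  - intros [y Hy]. destruct (complete _ _ _ Hy) as [H _].
    destruct (H e 0 eq_refl) as [s Hs]. exists s. rewrite Hs.
    unfold halted, st_ret. upc. split. lia. reflexivity.
  - intros [s Hs]. apply sound_iter in Hs. unfold Sden, st_ev in Hs. upc.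
    revert Hs. upc. intros (v & H1 & H2). exists v. exact H1.
Qed.

Lemma halted_step st : halted st -> step st = st.
Proof. intros [H1 H2]. apply step_halt; auto. Qed.

Lemma halted_mono s s' st : s <= s' -> halted (iter s step st) -> halted (iter s' step st).
Proof.
  intros Hle H. replace s' with ((s' - s) + s) by lia. rewrite iter_add.
  generalize (s' - s) as d. induction d; simpl; auto.
  rewrite (halted_step _ IHd). exact IHd.
Qed.


Definition runE := It (Cp step_ex (Sd X)) (Sd X) (Fs X).
Lemma den_runE s st : den runE (cpair s st) = iter s step st.
Proof.
  unfold runE. cbn [den]. upc. apply iter_ext. intro. cbn [den]. upc. reflexivity.
Qed.

Definition haltE := IfZ (Fs X) (KN 1) (IfZ (Fs (Sd (Sd X))) Zr (KN 1)).
Lemma den_haltE st : den haltE st = 0 <-> halted st.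
Proof.
  unfold haltE, halted. cbn [den KN].
  destruct (fst (unpair st)); [split; [discriminate|tauto]|].
  destruct (fst (unpair (snd (unpair (snd (unpair st)))))); split; intros; try discriminate.
  split; [lia|auto]. auto. destruct H; lia.
Qed.

Definition subE := It (Pd (Sd X)) (Fs X) (Sd X).
Lemma den_subE a b : den subE (cpair a b) = a - b.
Proof.
  unfold subE. cbn [den]. upc. rewrite iter_ext with (g := pred).
  - induction b; simpl. lia. rewrite IHb. lia.
  - intro. cbn [den]. upc. reflexivity.
Qed.

Definition leflag := IfZ subE Zr (KN 1).
Lemma den_leflag a b : den leflag (cpair a b) = 0 <-> a <= b.
Proof.
  unfold leflag. cbn [den KN]. rewrite den_subE.
  destruct (a - b) eqn:E; split; intro; try lia; discriminate.
Qed.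

Definition eqflag := IfZ subE (IfZ (Cp subE (Pr (Sd X) (Fs X))) Zr (KN 1)) (KN 1).
Lemma den_eqflag a b : den eqflag (cpair a b) = 0 <-> a = b.
Proof.
  unfold eqflag. cbn [den KN]. upc. rewrite !den_subE.
  destruct (a - b) eqn:E; [destruct (b - a) eqn:E2|]; split; intro; try lia; discriminate.
Qed.

Definition edge (n s a b : nat) : Prop :=
  a <= s /\ b <= s /\ halted (iter s step (st_ev n (cpair a b) 0)).

Definition edgeE :=
  IfZ (Cp leflag (Pr (Fs (Sd X)) (Sd (Fs X))))
    (IfZ (Cp leflag (Pr (Sd (Sd X)) (Sd (Fs X))))
       (Cp haltE (Cp runE (Pr (Sd (Fs X)) (mkEv (Fs (Fs X)) (Sd X) Zr))))
       (KN 1))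
    (KN 1).

Lemma den_edgeE n s a b : den edgeE (cpair (cpair n s) (cpair a b)) = 0 <-> edge n s a b.
Proof.
  unfold edgeE, edge, mkEv. cbn [den KN]. upc.
  pose proof (den_leflag a s) as H1. pose proof (den_leflag b s) as H2.
  destruct (den leflag (cpair a s)); [destruct (den leflag (cpair b s))|].
  - rewrite den_runE, den_haltE. unfold st_ev. intuition.
  - split; intro H; [discriminate|]. destruct H as (_ & Hb & _). apply H2 in Hb. discriminate.
  - split; intro H; [discriminate|]. destruct H as (Ha & _). apply H1 in Ha. discriminate.
Qed.

Inductive chain (R : nat -> nat -> Prop) : nat -> list nat -> nat -> Prop :=
| ch_nil a b : R a b -> chain R a [] b
| ch_cons a h l b : R a h -> chain R h l b -> chain R a (h :: l) b.

Fixpoint encl (l : list nat) : nat :=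
  match l with [] => 0 | h :: t => S (cpair h (encl t)) end.

Lemma encl_surj L : exists l, encl l = L.
Proof.
  induction L as [L IH] using lt_wf_ind. destruct L as [|L].
  - exists []. reflexivity.
  - destruct (IH (snd (unpair L))) as [t Ht]. pose proof (p2_le L). lia.
    exists (fst (unpair L) :: t). simpl. rewrite Ht, cpair_unpair. reflexivity.
Qed.

Lemma encl_len l : length l <= encl l.
Proof. induction l; simpl. lia. pose proof (cpair_ge_r a (encl l)). lia. Qed.

Definition pbody :=
  IfZ (Fs (Sd (Sd X))) (Sd X)
    (Pr (Fs (Pd (Fs (Sd (Sd X)))))
        (Pr (Sd (Pd (Fs (Sd (Sd X)))))
            (IfZ (Sd (Sd (Sd X)))
                 (Cp edgeE (Pr (Fs (Fs X)) (Pr (Fs (Sd X)) (Fs (Pd (Fs (Sd (Sd X))))))))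
                 (KN 1)))).
Definition ploop := It pbody (Pr (Fs (Sd X)) (Pr (Fs (Sd (Sd X))) Zr)) (Fs (Sd (Sd X))).
Definition pfin :=
  IfZ (Sd (Sd (Sd X)))
      (Cp edgeE (Pr (Fs (Fs X)) (Pr (Fs (Sd X)) (Sd (Sd (Sd (Fs X)))))))
      (KN 1).
Definition pathE := Cp pfin (Pr X ploop).

Fixpoint okp (R : nat -> nat -> Prop) (cur : nat) (l : list nat) : Prop :=
  match l with [] => True | h :: t => R cur h /\ okp R h t end.
Fixpoint lastn (cur : nat) (l : list nat) : nat :=
  match l with [] => cur | h :: t => lastn h t end.

Lemma chain_okp R a l b : chain R a l b <-> okp R a l /\ R (lastn a l) b.
Proof.
  revert a. induction l; intro a0; simpl; split.
  - intro H. inversion H; auto.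
  - intros [_ H]. constructor; auto.
  - intro H. inversion H; subst. apply IHl in H5. tauto.
  - intros [[H1 H2] H3]. constructor; auto. apply IHl. auto.
Qed.

Lemma den_pathE n s a l b :
  den pathE (cpair (cpair n s) (cpair a (cpair (encl l) b))) = 0 <-> chain (edge n s) a l b.
Proof.
  set (X0 := cpair (cpair n s) (cpair a (cpair (encl l) b))).
  set (G := fun st => den pbody (cpair X0 st)).
  assert (HG : forall cur t bad, G (cpair cur (cpair t bad)) =
     match t with 0 => cpair cur (cpair t bad)
     | S t' => cpair (fst (unpair t')) (cpair (snd (unpair t'))
          (match bad with 0 => den edgeE (cpair (cpair n s) (cpair cur (fst (unpair t')))) | S _ => 1 end))
     end).
  { intros. unfold G, pbody, X0. cbn [den KN]. upc. destruct t; reflexivity. }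
  assert (Hfix : forall k cur bad, iter k G (cpair cur (cpair 0 bad)) = cpair cur (cpair 0 bad)).
  { induction k; intros; simpl. auto. rewrite IHk, HG. auto. }
  assert (Hloop : forall l' k cur bad, length l' <= k ->
    exists bad', iter k G (cpair cur (cpair (encl l') bad)) = cpair (lastn cur l') (cpair 0 bad') /\
      (bad' = 0 <-> bad = 0 /\ okp (edge n s) cur l')).
  { induction l' as [|h t IH]; intros k cur bad Hk.
    - exists bad. rewrite Hfix. simpl. tauto.
    - destruct k as [|k]. simpl in Hk. lia.
      change (iter (S k) G ?y) with (G (iter k G y)).
      rewrite <- iter_shift. cbn [encl]. rewrite (HG cur (S (cpair h (encl t))) bad). upc.
      destruct (IH k h (match bad with 0 => den edgeE (cpair (cpair n s) (cpair cur h)) | S _ => 1 end))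
        as (bad' & H1 & H2). cbn [length] in Hk. lia.
      exists bad'. rewrite H1. split. reflexivity. rewrite H2. cbn [okp lastn].
      rewrite <- den_edgeE. destruct bad; split; intros; try tauto; try discriminate.
      all: destruct H as [H' _]; discriminate. }
  unfold pathE, ploop, pfin. cbn [den KN].
  fold X0. upc. unfold X0 at 1 2 3. upc.
  fold G.
  destruct (Hloop l (encl l) a 0 (encl_len l)) as (bad' & H1 & H2).
  unfold G in H1. unfold X0 in H1 |- *. upc. rewrite H1. upc.
  rewrite chain_okp. destruct bad'.
  - rewrite den_edgeE. unfold G, X0. rewrite H1. upc. tauto.
  - split; [discriminate|]. intros [Ho _]. pose proof (proj2 H2 (conj eq_refl Ho)) as Hc; discriminate Hc.
Qed.



Definition cycchk :=
  IfZ (Cp eqflag (Pr (Fs (Sd X)) (Fs (Sd (Sd X))))) (KN 1)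
    (IfZ (Cp pathE (Pr (Fs X) (Pr (Fs (Sd X)) (Pr (Fs (Sd (Sd (Sd X)))) (Fs (Sd (Sd X)))))))
         (Cp pathE (Pr (Fs X) (Pr (Fs (Sd (Sd X))) (Pr (Sd (Sd (Sd (Sd X)))) (Fs (Sd X))))))
         (KN 1)).

Definition cycq n s q := exists a b l1 l2, q = cpair a (cpair b (cpair (encl l1) (encl l2))) /\
  a <> b /\ chain (edge n s) a l1 b /\ chain (edge n s) b l2 a.

Lemma den_cycchk n s q : den cycchk (cpair (cpair n s) q) = 0 <-> cycq n s q.
Proof.
  destruct (decomp q) as (a & q2 & ->). destruct (decomp q2) as (b & q3 & ->).
  destruct (decomp q3) as (L1 & L2 & ->).
  destruct (encl_surj L1) as (l1 & <-). destruct (encl_surj L2) as (l2 & <-).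
  unfold cycchk. cbn [den KN]. upc.
  pose proof (den_eqflag a b) as He. pose proof (den_pathE n s a l1 b) as H1.
  pose proof (den_pathE n s b l2 a) as H2.
  unfold cycq. split.
  - intro H. exists a, b, l1, l2. split; auto.
    destruct (den eqflag (cpair a b)); [discriminate|].
    destruct (den pathE (cpair (cpair n s) (cpair a (cpair (encl l1) b)))); [|discriminate].
    repeat split. intro Hab. apply He in Hab. discriminate. apply H1; auto. apply H2; auto.
  - intros (a' & b' & l1' & l2' & Hq & Hab & C1 & C2).
    apply cpair_inj in Hq. destruct Hq as [<- Hq]. apply cpair_inj in Hq. destruct Hq as [<- Hq].
    apply cpair_inj in Hq. destruct Hq as [Hq1 Hq2].
    assert (E1 : encl l1 = encl l1') by auto. assert (E2 : encl l2 = encl l2') by auto.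
    rewrite E1, E2 in *.
    pose proof (den_pathE n s a l1' b) as H1'. pose proof (den_pathE n s b l2' a) as H2'.
    destruct (den eqflag (cpair a b)). exfalso; apply Hab; apply He; reflexivity.
    apply H1' in C1. rewrite C1. apply H2'. auto.
Qed.

Definition BE := It (Sc (Pr (Fs X) (Sd X))) Zr (Sc X).
Lemma den_BE s : den BE s = encl (repeat s (S s)).
Proof.
  unfold BE. cbn [den]. rewrite iter_ext with (g := fun st => S (cpair s st)).
  - generalize (S s). induction n; simpl; congruence.
  - intro. cbn [den]. upc. reflexivity.
Qed.

Definition QE := Pr X (Pr X (Pr BE BE)).
Definition Qb s := cpair s (cpair s (cpair (encl (repeat s (S s))) (encl (repeat s (S s))))).
Lemma den_QE s : den QE s = Qb s.
Proof. unfold QE, Qb. cbn [den]. rewrite den_BE. reflexivity. Qed.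

Definition cbody := Pr (Sc (Fs (Sd X)))
   (IfZ (Sd (Sd X)) Zr (IfZ (Cp cycchk (Pr (Fs X) (Fs (Sd X)))) Zr (KN 1))).
Definition cycE := Sd (It cbody (Pr Zr (KN 1)) (Sc (Cp QE (Sd X)))).

Lemma den_cycE n s : den cycE (cpair n s) = 0 <-> exists q, q <= Qb s /\ cycq n s q.
Proof.
  unfold cycE. cbn [den KN]. upc. rewrite den_QE.
  set (G := fun st => den cbody (cpair (cpair n s) st)).
  assert (HG : forall q f, G (cpair q f) = cpair (S q)
     (match f with 0 => 0 | S _ => match den cycchk (cpair (cpair n s) q) with 0 => 0 | S _ => 1 end end)).
  { intros. unfold G, cbody. cbn [den KN]. upc. reflexivity. }
  assert (HL : forall k, exists f, iter k G (cpair 0 1) = cpair k f /\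
      (f = 0 <-> exists q, q < k /\ cycq n s q)).
  { induction k as [|k IH].
    - exists 1. split. reflexivity. split. discriminate. intros (q & Hq & _). lia.
    - destruct IH as (f & H1 & H2). cbn [iter]. rewrite H1, HG.
      eexists. split. reflexivity.
      pose proof (den_cycchk n s k) as Hc.
      destruct f.
      + split; auto. intros _. destruct (proj1 H2 eq_refl) as (q & Hq & Hq2). exists q. split; auto.
      + destruct (den cycchk (cpair (cpair n s) k)).
        * split; auto. intros _. exists k. split. lia. apply Hc. auto.
        * split. discriminate. intros (q & Hq & Hq2).
          assert (q < k \/ q = k) as [Hlt| ->] by lia.
          -- assert (S f = 0) by (apply H2; eauto). discriminate.
          -- apply Hc in Hq2. discriminate. }
  destruct (HL (S (Qb s))) as (f & H1 & H2). fold G. rewrite H1. upc.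
  rewrite H2. split; intros (q & Hq & Hq2); exists q; split; auto; lia.
Qed.


Lemma chain_app R a l1 x l2 b : chain R a (l1 ++ x :: l2) b <-> chain R a l1 x /\ chain R x l2 b.
Proof.
  revert a. induction l1 as [|h t IH]; intro a; simpl; split.
  - intro H. inversion H; subst. split; auto. constructor; auto.
  - intros [H1 H2]. inversion H1; subst. constructor; auto.
  - intro H. inversion H; subst. apply IH in H5. destruct H5. split; auto. constructor; auto.
  - intros [H1 H2]. inversion H1; subst. constructor; auto. apply IH; auto.
Qed.

Lemma chain_short R a l b : chain R a l b -> exists l', chain R a l' b /\ NoDup l' /\ incl l' l.
Proof.
  remember (length l) as m eqn:Hm. revert a l b Hm.
  induction m as [m IH] using lt_wf_ind. intros a l b Hm H.
  destruct (NoDup_dec Nat.eq_dec l) as [Hn|Hn].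
  - exists l. split; auto. split; auto. apply incl_refl.
  - apply (not_NoDup (fun x y => Nat.eq_decidable x y)) in Hn.
    destruct Hn as (x & l1 & l2 & l3 & ->).
    apply chain_app in H. destruct H as [H1 H2]. apply chain_app in H2. destruct H2 as [_ H3].
    assert (Hc : chain R a (l1 ++ x :: l3) b) by (apply chain_app; auto).
    assert (Hlt : length (l1 ++ x :: l3) < m).
    { subst m. rewrite !length_app. simpl. rewrite length_app. simpl. lia. }
    destruct (IH _ Hlt a _ b eq_refl Hc) as (l' & C & N & I).
    exists l'. split; auto. split; auto. intros z Hz. apply I in Hz.
    apply in_app_or in Hz. apply in_or_app. destruct Hz as [Hz|Hz]; auto.
    right. destruct Hz as [<-|Hz]. left; auto. right. apply in_or_app. right. right. auto.
Qed.

Lemma chain_bound n s a l b : chain (edge n s) a l b ->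
  a <= s /\ b <= s /\ forall z, In z l -> z <= s.
Proof.
  induction 1 as [a b [H1 [H2 _]]|a h l b [H1 [H2 _]] _ [IH1 [IH2 IH3]]]; simpl.
  - repeat split; auto. intros z [].
  - repeat split; auto. intros z [<-|Hz]; auto.
Qed.

Lemma encl_rep_mono s m m' : m <= m' -> encl (repeat s m) <= encl (repeat s m').
Proof.
  induction 1. lia. simpl. pose proof (cpair_ge_r s (encl (repeat s m0))). lia.
Qed.

Lemma encl_bound s l : NoDup l -> (forall z, In z l -> z <= s) -> encl l <= encl (repeat s (S s)).
Proof.
  intros Hn Hb.
  assert (Hl : length l <= S s).
  { replace (S s) with (length (seq 0 (S s))) by apply length_seq.
    apply NoDup_incl_length; auto. intros z Hz. apply in_seq. apply Hb in Hz. lia. }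
  eapply Nat.le_trans. 2: apply (encl_rep_mono s _ _ Hl).
  clear Hn Hl. induction l; simpl. lia.
  apply le_n_S. apply cpair_mono. apply Hb; simpl; auto. apply IHl. intros; apply Hb; simpl; auto.
Qed.

Definition Bad n s := exists a b l1 l2, a <> b /\ chain (edge n s) a l1 b /\ chain (edge n s) b l2 a.

Lemma den_cycE_Bad n s : den cycE (cpair n s) = 0 <-> Bad n s.
Proof.
  rewrite den_cycE. split.
  - intros (q & _ & a & b & l1 & l2 & _ & H). exists a, b, l1, l2. auto.
  - intros (a & b & l1 & l2 & Hab & C1 & C2).
    destruct (chain_short _ _ _ _ C1) as (l1' & C1' & N1 & _).
    destruct (chain_short _ _ _ _ C2) as (l2' & C2' & N2 & _).
    destruct (chain_bound _ _ _ _ _ C1') as (Ha & Hb & B1).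
    destruct (chain_bound _ _ _ _ _ C2') as (_ & _ & B2).
    exists (cpair a (cpair b (cpair (encl l1') (encl l2')))). split.
    + unfold Qb. apply cpair_mono; auto. apply cpair_mono; auto.
      apply cpair_mono; apply encl_bound; auto.
    + exists a, b, l1', l2'. auto.
Qed.


Definition nz := Fs (Fs X).
Definition xz := Sd (Fs X).
Definition iz := Fs xz.
Definition jz := Sd xz.
Definition sz := Fs (Sd X).
Definition Lz := Sd (Sd X).
Definition nsz := Pr nz sz.
Definition pflag := Cp pathE (Pr nsz (Pr iz (Pr Lz jz))).
Definition eqz := Cp eqflag (Pr iz jz).
Definition chkT := pflag.
Definition chkP := IfZ eqz Zr pflag.
Definition chkO := IfZ eqz Zr (IfZ pflag (IfZ (Cp cycE nsz) (KN 1) Zr) (KN 1)).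

Lemma den_pflag n i j s l :
  den pflag (cpair (cpair n (cpair i j)) (cpair s (encl l))) = 0 <-> chain (edge n s) i l j.
Proof.
  unfold pflag, nsz, nz, sz, iz, jz, Lz, xz. cbn [den]. upc. apply den_pathE.
Qed.

Lemma den_eqz n i j k : den eqz (cpair (cpair n (cpair i j)) k) = 0 <-> i = j.
Proof. unfold eqz, iz, jz, xz. cbn [den]. upc. apply den_eqflag. Qed.

Lemma ex_k (P : nat -> Prop) : (exists k, P k) <-> exists s l, P (cpair s (encl l)).
Proof.
  split.
  - intros [k Hk]. destruct (decomp k) as (s & L & ->). destruct (encl_surj L) as (l & <-).
    eauto.
  - intros (s & l & H). eauto.
Qed.

Lemma semT n i j : (exists k, den chkT (cpair (cpair n (cpair i j)) k) = 0) <->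
  exists s l, chain (edge n s) i l j.
Proof.
  rewrite ex_k. split; intros (s & l & H); exists s, l; apply den_pflag; auto.
Qed.

Lemma semP n i j : (exists k, den chkP (cpair (cpair n (cpair i j)) k) = 0) <->
  i = j \/ exists s l, chain (edge n s) i l j.
Proof.
  rewrite ex_k. unfold chkP. cbn [den]. split.
  - intros (s & l & H). pose proof (den_eqz n i j (cpair s (encl l))) as He.
    destruct (den eqz _). left; apply He; auto. right. exists s, l. apply den_pflag; auto.
  - intros [<-|(s & l & H)].
    + exists 0, []. pose proof (den_eqz n i i (cpair 0 (encl []))) as He.
      destruct (den eqz _). auto. discriminate (proj2 He eq_refl).
    + exists s, l. destruct (den eqz _). auto. apply den_pflag; auto.
Qed.

Lemma semO n i j : (exists k, den chkO (cpair (cpair n (cpair i j)) k) = 0) <->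
  i = j \/ exists s l, chain (edge n s) i l j /\ ~ Bad n s.
Proof.
  rewrite ex_k. unfold chkO. cbn [den KN]. split.
  - intros (s & l & H). pose proof (den_eqz n i j (cpair s (encl l))) as He.
    destruct (den eqz _). left; apply He; auto. right. exists s, l.
    pose proof (den_pflag n i j s l) as Hp. destruct (den pflag _); [|discriminate].
    split. apply Hp; auto.
    unfold nsz, nz, sz in H. cbn [den] in H. upc. rewrite <- den_cycE_Bad.
    revert H. upc. destruct (den cycE (cpair n s)); [discriminate|]. intros _ Hc. discriminate.
  - intros [<-|(s & l & H & HB)].
    + exists 0, []. pose proof (den_eqz n i i (cpair 0 (encl []))) as He.
      destruct (den eqz _). auto. discriminate (proj2 He eq_refl).
    + exists s, l. destruct (den eqz _). auto.
      apply den_pflag in H. rewrite H.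
      unfold nsz, nz, sz. cbn [den]. upc. rewrite <- den_cycE_Bad in HB.
      destruct (den cycE (cpair n s)). contradiction. reflexivity.
Qed.


Definition Prog (c : ex) (n : nat) : code := CComp (CMu (compile c)) (CPair (compile (KN n)) cid).

Lemma W_Prog c n x : W (enc (Prog c n)) x <-> exists k, den c (cpair (cpair n x) k) = 0.
Proof.
  unfold W, phi. rewrite decode_enc. unfold Prog.
  assert (Hp : eval (CPair (compile (KN n)) cid) x (cpair n x)).
  { constructor. rewrite <- (den_KN n x) at 2. apply compile_ok. apply ev_id. }
  rewrite <- (eval_mu_iff (compile c) (den c) (cpair n x) (compile_ok c)).
  split.
  - intros [y Hy]. inversion Hy; subst. assert (y0 = cpair n x) by (eapply eval_det; eauto).
    subst. eauto.
  - intros [y Hy]. exists y. econstructor; eauto.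
Qed.

Definition dbl (e : ex) := It (Sc (Sd X)) e e.
Lemma den_dbl e x : den (dbl e) x = 2 * den e x.
Proof.
  unfold dbl. cbn [den]. rewrite iter_ext with (g := S).
  - assert (Hi : forall m y, iter m S y = m + y) by (induction m; simpl; auto).
    rewrite Hi. lia.
  - intro. cbn [den]. upc. reflexivity.
Qed.

Fixpoint addc (c : nat) (e : ex) : ex := match c with 0 => e | S c => Sc (addc c e) end.
Lemma den_addc c e x : den (addc c e) x = c + den e x.
Proof. induction c; simpl; auto. Qed.

Definition m8p (c : nat) (e : ex) := addc c (dbl (dbl (dbl e))).
Lemma den_m8p c e x : den (m8p c e) x = 8 * den e x + c.
Proof. unfold m8p. rewrite den_addc, !den_dbl. lia. Qed.

Definition encKNE := It (m8p 4 (Pr (KN 1) (Sd X))) Zr X.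
Lemma den_encKNE n : den encKNE n = enc (compile (KN n)).
Proof.
  unfold encKNE. cbn [den]. rewrite iter_ext with (g := fun st => 8 * cpair 1 st + 4).
  - induction n. reflexivity. cbn [iter compile KN enc]. rewrite IHn. reflexivity.
  - intro. rewrite den_m8p. cbn [den KN]. upc. reflexivity.
Qed.

Definition tE (c : ex) :=
  m8p 4 (Pr (KN (8 * enc (compile c) + 7)) (m8p 5 (Pr encKNE (KN (enc cid))))).

Lemma den_tE c n : den (tE c) n = enc (Prog c n).
Proof.
  unfold tE, Prog. rewrite den_m8p. cbn [den]. rewrite den_m8p. cbn [den].
  rewrite !den_KN, den_encKNE. reflexivity.
Qed.

Lemma computable_Prog c : computable (fun n => enc (Prog c n)).
Proof.
  exists (enc (compile (tE c))). intro x. unfold phi. rewrite decode_enc.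
  rewrite <- den_tE. apply compile_ok.
Qed.


Lemma edge_V n s a b : edge n s a b -> V n a b.
Proof. intros (_ & _ & H). unfold V. apply W_iff. eauto. Qed.

Lemma edge_mono n s s' a b : s <= s' -> edge n s a b -> edge n s' a b.
Proof. intros Hs (H1 & H2 & H3). split; [lia|split; [lia|]]. eapply halted_mono; eauto. Qed.

Lemma V_edge n a b : V n a b -> exists s, edge n s a b.
Proof.
  intro H. apply W_iff in H. destruct H as [s0 Hs].
  exists (Nat.max s0 (Nat.max a b)). split; [lia|split; [lia|]].
  eapply halted_mono; [|eauto]. lia.
Qed.

Lemma chain_mono (R R' : nat -> nat -> Prop) a l b :
  (forall x y, R x y -> R' x y) -> chain R a l b -> chain R' a l b.
Proof. intros HR H. induction H; constructor; auto. Qed.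

Lemma chain_trans R a l1 b l2 c : chain R a l1 b -> chain R b l2 c -> chain R a (l1 ++ b :: l2) c.
Proof. intros. apply chain_app. auto. Qed.

Lemma chain_collapse R a l b : transitive_rel R -> chain R a l b -> R a b.
Proof. intros HT H. induction H; auto. eapply HT; eauto. Qed.

Lemma TC_iff n i j : (exists s l, chain (edge n s) i l j) <-> exists l, chain (V n) i l j.
Proof.
  split.
  - intros (s & l & H). exists l. eapply chain_mono; [|eauto]. intros; eapply edge_V; eauto.
  - intros (l & H). induction H.
    + destruct (V_edge _ _ _ H) as [s Hs]. exists s, []. constructor; auto.
    + destruct (V_edge _ _ _ H) as [s1 Hs1]. destruct IHchain as (s2 & l2 & H2).
      exists (Nat.max s1 s2), (h :: l2). constructor.
      eapply edge_mono; [|eauto]; lia.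
      eapply chain_mono; [|eauto]. intros; eapply edge_mono; [|eauto]; lia.
Qed.

Definition TC (R : nat -> nat -> Prop) i j := exists l, chain R i l j.

Lemma TC_trans R : transitive_rel (TC R).
Proof. intros a b c (l1 & H1) (l2 & H2). exists (l1 ++ b :: l2). apply chain_trans; auto. Qed.

Lemma TC_ext R R' : rel_eq R R' -> rel_eq (TC R) (TC R').
Proof.
  intros H i j. split; intros (l & Hl); exists l; eapply chain_mono; try exact Hl; intros; apply H; auto.
Qed.

Lemma TC_self R : transitive_rel R -> rel_eq R (TC R).
Proof.
  intros HT i j. split.
  - intro H. exists []. constructor. auto.
  - intros (l & H). eapply chain_collapse; eauto.
Qed.

Definition tf := fun n => enc (Prog chkT n).
Definition pf := fun n => enc (Prog chkP n).
Definition of := fun n => enc (Prog chkO n).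

Lemma V_t n i j : V (tf n) i j <-> TC (V n) i j.
Proof. unfold V at 1, tf. rewrite W_Prog, semT, TC_iff. reflexivity. Qed.

Lemma V_p n i j : V (pf n) i j <-> i = j \/ TC (V n) i j.
Proof. unfold V at 1, pf. rewrite W_Prog, semP, TC_iff. reflexivity. Qed.

Lemma V_o n i j : V (of n) i j <-> i = j \/ exists s l, chain (edge n s) i l j /\ ~ Bad n s.
Proof. unfold V at 1, of. rewrite W_Prog, semO. reflexivity. Qed.

Theorem proposition16 :
  (exists t : nat -> nat, computable t /\
     forall m n : nat,
       in_T (t n) /\
       (in_T n -> rel_eq (V n) (V (t n))) /\
       (rel_eq (V m) (V n) -> rel_eq (V (t m)) (V (t n)))) /\
  (exists p : nat -> nat, computable p /\
     forall m n : nat,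
       in_P (p n) /\
       (in_P n -> rel_eq (V n) (V (p n))) /\
       (rel_eq (V m) (V n) -> rel_eq (V (p m)) (V (p n)))) /\
  (exists o : nat -> nat, computable o /\
     forall n : nat,
       in_O (o n) /\
       (in_O n -> rel_eq (V n) (V (o n)))).
Proof.
  split; [|split].
  - exists tf. split. apply computable_Prog. intros m n. split; [|split].
    + intros a b c H1 H2. apply V_t in H1, H2. apply V_t. eapply TC_trans; eauto.
    + intros HT i j. rewrite V_t. apply TC_self. auto.
    + intros HE i j. rewrite !V_t. apply TC_ext. auto.
  - exists pf. split. apply computable_Prog. intros m n. split; [|split].
    + split.
      * intro a. apply V_p. auto.
      * intros a b c H1 H2. apply V_p in H1, H2. apply V_p.
        destruct H1 as [<-|H1]; auto. destruct H2 as [<-|H2]; auto.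
        right. eapply TC_trans; eauto.
    + intros [HR HT] i j. rewrite V_p. split.
      * intro H. right. apply (TC_self _ HT i j); auto.
      * intros [<-|H]. apply HR. apply (TC_self _ HT i j); auto.
    + intros HE i j. rewrite !V_p. pose proof (TC_ext _ _ HE i j). tauto.
  - exists of. split. apply computable_Prog. intro n. split.
    + split; [|split].
      * intro a. apply V_o. auto.
      * intros a b c H1 H2. apply V_o in H1, H2. apply V_o.
        destruct H1 as [<-|(s1 & l1 & C1 & B1)]; [exact H2|].
        destruct H2 as [<-|(s2 & l2 & C2 & B2)]; [right; exists s1, l1; auto|].
        right. destruct (Nat.le_ge_cases s1 s2) as [Hs|Hs].
        -- exists s2, (l1 ++ b :: l2). split; auto. apply chain_trans; auto.
           eapply chain_mono; [|eauto]. intros; eapply edge_mono; eauto.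
        -- exists s1, (l1 ++ b :: l2). split; auto. apply chain_trans; auto.
           eapply chain_mono; [|eauto]. intros; eapply edge_mono; eauto.
      * intros a b H1 H2. apply V_o in H1, H2.
        destruct H1 as [<-|(s1 & l1 & C1 & B1)]; [reflexivity|].
        destruct H2 as [<-|(s2 & l2 & C2 & B2)]; [reflexivity|].
        destruct (Nat.eq_dec a b) as [|Hab]; auto. exfalso.
        destruct (Nat.le_ge_cases s1 s2) as [Hs|Hs].
        -- apply B2. exists a, b, l1, l2. split; auto. split; auto.
           eapply chain_mono; [|eauto]. intros; eapply edge_mono; eauto.
        -- apply B1. exists a, b, l1, l2. split; auto. split; auto.
           eapply chain_mono; [|eauto]. intros; eapply edge_mono; eauto.
    + intros (HR & HT & HA) i j. rewrite V_o.
      assert (HB : forall s, ~ Bad n s).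
      { intros s (a & b & l1 & l2 & Hab & C1 & C2). apply Hab. apply HA.
        - eapply chain_collapse; eauto. eapply chain_mono; [|eauto]. intros; eapply edge_V; eauto.
        - eapply chain_collapse; eauto. eapply chain_mono; [|eauto]. intros; eapply edge_V; eauto. }
      split.
      * intro H. right. destruct (V_edge _ _ _ H) as [s Hs]. exists s, []. split; auto.
        constructor; auto.
      * intros [<-|(s & l & C & _)]. apply HR.
        eapply chain_collapse; eauto. eapply chain_mono; [|eauto]. intros; eapply edge_V; eauto.
Qed.
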